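(* Let $M$ be $\mathbb{E}^2$, $\mathbb{S}^2$ or $\mathbb{H}^2$ with constant curvature $k$ (so $k=0$, $k>0$, $k<0$ respectively). Let $K\subset M$ be a compact region with $C^2$ boundary $\partial K$, and let $\kappa_g$ be the geodesic curvature of $\partial K$. Fix a point $O\in M$ and let $(\rho,\theta)$ be geodesic polar coordinates about $O$. Then the perimeter (length of $\partial K$) is $$\mathcal{P}=\int_{\partial K}\ell(\rho)^2\,\kappa_g\,d\theta+k\int_{\partial K}a(\rho)\,ds .$$
   Context: $\ell(\rho)=L(\rho)/2\pi$ and $a(\rho)=A(\rho)/2\pi$, where $L(\rho)$ and $A(\rho)$ are the circumference and area of a disk of radius $\rho$ in $M$: for $k>0$, $\ell(\rho)=\sin(\sqrt{k}\rho)/\sqrt{k}$, $a(\rho)=(1-\cos(\sqrt{k}\rho))/k$; for $k=0$, $\ell(\rho)=\rho$, $a(\rho)=\rho^2/2$; for $k<0$, $\ell(\rho)=\sinh(\sqrt{-k}\rho)/\sqrt{-k}$, $a(\rho)=(1-\cosh(\sqrt{-k}\rho))/k$. $\partial K$ is oriented positively (counterclockwise, $K$ on the left) and parametrized by arclength $s$, with unit tangent $T$ and outward unit normal $N$; $\kappa_g$ is defined by $\nabla_T T=-\kappa_g N$ (so $\kappa_g\ge 0$ on convex boundaries). The 1-form $\ell(\rho)^2\,d\theta$ extends smoothly across $O$ (and, on $\mathbb{S}^2$, across the point antipodal to $O$), and the first integral is that of this smooth 1-form times $\kappa_g$ along $\partial K$. *)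

(* Defs.v *)
From Stdlib Require Import Reals Lra ClassicalEpsilon.
From Coquelicot Require Import Coquelicot.
Open Scope R_scope.

Definition V3 := (R * R * R)%type.
Definition v1 (p : V3) : R := fst (fst p).
Definition v2 (p : V3) : R := snd (fst p).
Definition v3 (p : V3) : R := snd p.
Definition mkV (a b c : R) : V3 := ((a, b), c).
Definition vadd (p q : V3) : V3 := mkV (v1 p + v1 q) (v2 p + v2 q) (v3 p + v3 q).
Definition vscal (c : R) (p : V3) : V3 := mkV (c * v1 p) (c * v2 p) (c * v3 p).
Definition vsub (p q : V3) : V3 := vadd p (vscal (-1) q).
Definition cross (a b : V3) : V3 :=
  mkV (v2 a * v3 b - v3 a * v2 b) (v3 a * v1 b - v1 a * v3 b) (v1 a * v2 b - v2 a * v1 b).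
(** Euclidean norm of R^3 (used only for topology of the ambient space) *)
Definition enorm (p : V3) : R := sqrt (v1 p ^ 2 + v2 p ^ 2 + v3 p ^ 2).

(** * The model space M of constant curvature k
    k > 0 : sphere {p | p.p = 1/k} in Euclidean R^3 (radius 1/sqrt k);
    k = 0 : the plane {p | p_3 = 0} in Euclidean R^3;
    k < 0 : hyperboloid sheet {p | <p,p>_L = 1/k, p_3 > 0} in Minkowski R^{2,1}. *)
Definition eps (k : R) : R := if Rlt_dec k 0 then -1 else 1.
(** ambient bilinear form (Euclidean for k >= 0, Lorentzian for k < 0);
    it restricts to the Riemannian metric of M on tangent vectors *)
Definition B (k : R) (u v : V3) : R := v1 u * v1 v + v2 u * v2 v + eps k * (v3 u * v3 v).
Definition onM (k : R) (p : V3) : Prop :=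
  if Req_EM_T k 0 then v3 p = 0 else (B k p p = / k /\ (k < 0 -> 0 < v3 p)).
(** unit normal of M at p (B(n,n) = eps k) *)
Definition nrm (k : R) (p : V3) : V3 :=
  if Req_EM_T k 0 then mkV 0 0 1 else vscal (sqrt (Rabs k)) p.
Definition tangent (k : R) (p v : V3) : Prop := B k (nrm k p) v = 0.
(** rotation by +pi/2 in T_pM (counterclockwise orientation of M:
    the one induced by the standard orientation of the (x,y)-plane,
    i.e. by the normal nrm) *)
Definition Jrot (k : R) (p v : V3) : V3 :=
  let w := cross (nrm k p) v in mkV (v1 w) (v2 w) (eps k * v3 w).

(** * The functions ell = L/2pi and a = A/2pi of the paper *)
Definition ell (k rho : R) : R :=
  if Rlt_dec 0 k then sin (sqrt k * rho) / sqrt k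
  else if Req_EM_T k 0 then rho
  else sinh (sqrt (- k) * rho) / sqrt (- k).
Definition area_a (k rho : R) : R :=
  if Rlt_dec 0 k then (1 - cos (sqrt k * rho)) / k
  else if Req_EM_T k 0 then rho ^ 2 / 2
  else (1 - cosh (sqrt (- k) * rho)) / k.

(** geodesic of M through p with unit initial velocity u (u tangent at p),
    at time t:  cos(sqrt k t) p + sin(sqrt k t)/sqrt k u, etc.
    (note 1 - k a(t) = cos(sqrt k t), 1, cosh(sqrt(-k) t)) *)
Definition geod (k : R) (p u : V3) (t : R) : V3 :=
  vadd (vscal (1 - k * area_a k t) p) (vscal (ell k t) u).

Definition frame (k : R) (O E1 E2 : V3) : Prop :=
  tangent k O E1 /\ tangent k O E2 /\ B k E1 E1 = 1 /\ B k E2 E2 = 1 /\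
  B k E1 E2 = 0 /\ E2 = Jrot k O E1.
Definition Phi (k : R) (O E1 E2 : V3) (r th : R) : V3 :=
  geod k O (vadd (vscal (cos th) E1) (vscal (sin th) E2)) r.
Definition polar (k : R) (O E1 E2 p : V3) (rt : R * R) : Prop :=
  Phi k O E1 E2 (fst rt) (snd rt) = p /\ 0 <= fst rt /\
  (0 < k -> fst rt <= PI / sqrt k).
Definition polar_of (k : R) (O E1 E2 p : V3) : R * R :=
  epsilon (inhabits (0, 0)) (polar k O E1 E2 p).
Definition rho (k : R) (O E1 E2 p : V3) : R := fst (polar_of k O E1 E2 p).

Definition Dv (g : R -> V3) (s : R) : V3 :=
  mkV (Derive (fun t => v1 (g t)) s) (Derive (fun t => v2 (g t)) s)
      (Derive (fun t => v3 (g t)) s).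
Definition C2fun (c : R -> R) : Prop :=
  (forall t, ex_derive c t) /\ (forall t, ex_derive (Derive c) t) /\
  (forall t, continuous (Derive (Derive c)) t).
Definition C2curve (g : R -> V3) : Prop :=
  C2fun (fun t => v1 (g t)) /\ C2fun (fun t => v2 (g t)) /\ C2fun (fun t => v3 (g t)).

(** The 1-form ell(rho)^2 d theta at p applied to v: since |d_theta| = ell(rho),
    ell^2 dtheta(v) = < v, d Phi / d theta >, evaluated at polar coordinates
    of p.  This is the smooth extension (it vanishes at O and at the antipode). *)
Definition ell2dtheta (k : R) (O E1 E2 p v : V3) : R :=
  let rt := polar_of k O E1 E2 p in
  B k v (Dv (fun th => Phi k O E1 E2 (fst rt) th) (snd rt)).

(** geodesic curvature of a unit-speed curve g in M at s, with the convention
    nabla_T T = - kappa_g N, N = outward normal = - J T (region on the left).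
    nabla_T T is the tangential part of the ambient acceleration. *)
Definition covacc (k : R) (g : R -> V3) (s : R) : V3 :=
  let n := nrm k (g s) in
  let acc := Dv (Dv g) s in
  vsub acc (vscal (B k acc n / B k n n) n).
Definition kappa_g (k : R) (g : R -> V3) (s : R) : R :=
  B k (covacc k g s) (Jrot k (g s) (Dv g s)).

Definition bdryM (k : R) (K : V3 -> Prop) (p : V3) : Prop :=
  onM k p /\ forall e, 0 < e ->
    (exists q, onM k q /\ K q /\ enorm (vsub q p) < e) /\
    (exists q, onM k q /\ ~ K q /\ enorm (vsub q p) < e).
Definition closed3 (K : V3 -> Prop) : Prop :=
  forall p, (forall e, 0 < e -> exists q, K q /\ enorm (vsub q p) < e) -> K p.
Definition bounded3 (K : V3 -> Prop) : Prop :=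
  exists C, forall p, K p -> enorm p <= C.

(** K is a compact region of M whose boundary is the disjoint union of the
    n simple closed C^2 curves gam i (i < n), gam i of length L i, parametrized
    by arclength (L i - periodic), positively oriented (K on the left). *)
Definition compact_region_C2_boundary (k : R) (K : V3 -> Prop) (n : nat)
    (L : nat -> R) (gam : nat -> R -> V3) : Prop :=
  (forall p, K p -> onM k p) /\ closed3 K /\ bounded3 K /\
  (forall i, (i < n)%nat ->
     0 < L i /\ C2curve (gam i) /\
     (forall s, onM k (gam i s)) /\
     (forall s, gam i (s + L i) = gam i s) /\
     (forall s, B k (Dv (gam i) s) (Dv (gam i) s) = 1) /\
     (forall s s', 0 <= s < L i -> 0 <= s' < L i -> gam i s = gam i s' -> s = s') /\
     (forall s, exists d, 0 < d /\ forall t,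
         (0 < t < d -> K (geod k (gam i s) (Jrot k (gam i s) (Dv (gam i) s)) t)) /\
         (- d < t < 0 -> ~ K (geod k (gam i s) (Jrot k (gam i s) (Dv (gam i) s)) t)))) /\
  (forall i j s s', (i < n)%nat -> (j < n)%nat -> i <> j -> gam i s <> gam j s') /\
  (forall p, bdryM k K p <-> exists i s, (i < n)%nat /\ gam i s = p).

Fixpoint sumR (n : nat) (f : nat -> R) : R :=
  match n with O => 0 | S m => sumR m f + f m end.

Definition perimeter (n : nat) (L : nat -> R) : R := sumR n L.

(* Main.v *)
Require Import Defs.
From Stdlib Require Import Reals Lra Lia Nsatz ClassicalEpsilon.
From Coquelicot Require Import Coquelicot.
Open Scope R_scope.



Definition det (a b c : V3) : R :=
  v1 a*(v2 b*v3 c - v3 b*v2 c) + v2 a*(v3 b*v1 c - v1 b*v3 c) + v3 a*(v1 b*v2 c - v2 b*v1 c).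

Ltac vunf := unfold B, det, Jrot, cross, vsub, vadd, vscal, v1, v2, v3, mkV in *; cbn [fst snd] in *.

Lemma kcases k : k <> 0 ->
  (0 < k /\ eps k = 1 /\ sqrt (Rabs k) * sqrt (Rabs k) = k) \/
  (k < 0 /\ eps k = -1 /\ sqrt (Rabs k) * sqrt (Rabs k) = -k).
Proof.
  intros Hk. unfold eps. destruct (Rlt_dec k 0) as [H|H].
  - right. split; [lra|split; [reflexivity|]]. rewrite sqrt_sqrt by (apply Rabs_pos).
    apply Rabs_left; lra.
  - left. assert (0 < k) by lra. split; [lra|split; [reflexivity|]].
    rewrite sqrt_sqrt by (apply Rabs_pos). apply Rabs_right; lra.
Qed.

Lemma eps0 : eps 0 = 1.
Proof. unfold eps. destruct (Rlt_dec 0 0); lra. Qed.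

Lemma nrm_nz k p : k <> 0 -> nrm k p = vscal (sqrt (Rabs k)) p.
Proof. intros. unfold nrm. destruct (Req_EM_T k 0); [contradiction|reflexivity]. Qed.

Lemma nrm_0 p : nrm 0 p = mkV 0 0 1.
Proof. unfold nrm. destruct (Req_EM_T 0 0); [reflexivity|lra]. Qed.

Lemma sk_pos k : k <> 0 -> 0 < sqrt (Rabs k).
Proof. intros. apply sqrt_lt_R0. apply Rabs_pos_lt; auto. Qed.

Lemma B_J k x p v : k <> 0 -> B k x (Jrot k p v) = sqrt (Rabs k) * det x p v.
Proof.
  intros Hk. unfold Jrot. rewrite nrm_nz by auto.
  destruct (kcases k Hk) as [[_ [He _]]|[_ [He _]]];
  destruct x as [[x1 x2] x3]; destruct p as [[p1 p2] p3]; destruct v as [[w1 w2] w3];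
  vunf; rewrite He; ring.
Qed.

Lemma Dv_Phi k O E1 E2 r th :
  Dv (fun t => Phi k O E1 E2 r t) th =
  vscal (ell k r) (vadd (vscal (- sin th) E1) (vscal (cos th) E2)).
Proof.
  destruct O as [[o1 o2] o3]; destruct E1 as [[a1 a2] a3]; destruct E2 as [[b1 b2] b3].
  unfold Dv, Phi, geod. vunf.
  f_equal; [f_equal|]; apply is_derive_unique; auto_derive; auto.
  all: ring.
Qed.



Lemma B_scal_l k c x y : B k (vscal c x) y = c * B k x y.
Proof. destruct x as [[x1 x2] x3]; destruct y as [[y1 y2] y3]; vunf; ring. Qed.

Lemma frame_nz k O E1 E2 : k <> 0 -> onM k O -> frame k O E1 E2 ->
  k * B k O O = 1 /\ B k O E1 = 0 /\ B k E1 E1 = 1 /\ E2 = Jrot k O E1.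
Proof.
  intros Hk HO [Ht1 [Ht2 [H11 [H22 [H12 HE]]]]].
  unfold onM in HO. destruct (Req_EM_T k 0); [contradiction|].
  destruct HO as [HO _]. rewrite HO. split; [field; auto|].
  unfold tangent in Ht1. rewrite nrm_nz, B_scal_l in Ht1 by auto.
  pose proof (sk_pos k Hk). split; [|split; auto].
  apply Rmult_integral in Ht1. destruct Ht1; [lra|auto].
Qed.

Lemma polar_facts_nz k O E1 E2 r th p : k <> 0 -> onM k O -> frame k O E1 E2 ->
  Phi k O E1 E2 r th = p ->
  1 - k * area_a k r = k * B k O p /\
  forall v, B k v (Dv (fun t => Phi k O E1 E2 r t) th) = sqrt (Rabs k) * det v O p.
Proof.
  intros Hk HO Hf HP. destruct (frame_nz k O E1 E2 Hk HO Hf) as [H1 [H2 [H3 HE]]].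
  split.
  - subst p. unfold Phi, geod. subst E2.
    set (c := 1 - k * area_a k r). set (l := ell k r).
    unfold Jrot in *. rewrite nrm_nz in * by auto.
    destruct (kcases k Hk) as [[_ [He Hs]]|[_ [He Hs]]];
    destruct O as [[o1 o2] o3]; destruct E1 as [[a1 a2] a3]; vunf; rewrite He in *;
    set (s := sqrt (Rabs k)) in *; nsatz.
  - intros v. rewrite Dv_Phi. subst p. unfold Phi, geod. subst E2.
    set (c := 1 - k * area_a k r). set (l := ell k r).
    unfold Jrot in *. rewrite nrm_nz in * by auto.
    destruct (kcases k Hk) as [[_ [He Hs]]|[_ [He Hs]]];
    destruct O as [[o1 o2] o3]; destruct E1 as [[a1 a2] a3]; destruct v as [[w1 w2] w3];
    vunf; rewrite He in *;
    set (s := sqrt (Rabs k)) in *; set (cs := cos th) in *; set (sn := sin th) in *; nsatz.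
Qed.

Lemma area0 r : area_a 0 r = r ^ 2 / 2.
Proof. unfold area_a. destruct (Rlt_dec 0 0); [lra|]. destruct (Req_EM_T 0 0); [auto|lra]. Qed.
Lemma ell0 r : ell 0 r = r.
Proof. unfold ell. destruct (Rlt_dec 0 0); [lra|]. destruct (Req_EM_T 0 0); [auto|lra]. Qed.

Lemma frame_0 O E1 E2 : onM 0 O -> frame 0 O E1 E2 ->
  v3 O = 0 /\ v3 E1 = 0 /\ B 0 E1 E1 = 1 /\ E2 = mkV (- v2 E1) (v1 E1) 0.
Proof.
  intros HO [Ht1 [Ht2 [H11 [H22 [H12 HE]]]]].
  unfold onM in HO. destruct (Req_EM_T 0 0); [|lra].
  unfold tangent in Ht1. rewrite nrm_0 in Ht1. rewrite HE. unfold Jrot. rewrite nrm_0.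
  destruct E1 as [[a1 a2] a3]; vunf. rewrite eps0 in *. repeat split; auto; try lra.
  f_equal; [f_equal|]; ring.
Qed.

Lemma polar_facts_0 O E1 E2 r th p : onM 0 O -> frame 0 O E1 E2 ->
  Phi 0 O E1 E2 r th = p ->
  area_a 0 r = B 0 (vsub p O) (vsub p O) / 2 /\
  forall v, B 0 v (Dv (fun t => Phi 0 O E1 E2 r t) th) =
     - v1 v * (v2 p - v2 O) + v2 v * (v1 p - v1 O).
Proof.
  intros HO Hf HP. destruct (frame_0 O E1 E2 HO Hf) as [H1 [H2 [H3 HE]]].
  pose proof (sin2_cos2 th) as Hsc. unfold Rsqr in Hsc.
  split.
  - subst p. unfold Phi, geod. subst E2. rewrite area0, ell0, Rmult_0_l, Rminus_0_r.
    destruct O as [[o1 o2] o3]; destruct E1 as [[a1 a2] a3]; vunf; rewrite eps0 in *;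
    set (cs := cos th) in *; set (sn := sin th) in *; subst;
    unfold Rdiv; apply Rmult_eq_compat_r. replace (r^2) with (r*r) by ring. nsatz.
  - intros v. rewrite Dv_Phi. subst p. unfold Phi, geod. subst E2. rewrite ell0.
    destruct O as [[o1 o2] o3]; destruct E1 as [[a1 a2] a3]; destruct v as [[w1 w2] w3];
    vunf; rewrite eps0 in *; set (cs := cos th) in *; set (sn := sin th) in *; subst; nsatz.
Qed.



Lemma frame_basis_nz k O E1 E2 w : k <> 0 -> onM k O -> frame k O E1 E2 ->
  B k w O = 0 ->
  v1 w = B k w E1 * v1 E1 + B k w E2 * v1 E2 /\
  v2 w = B k w E1 * v2 E1 + B k w E2 * v2 E2 /\
  v3 w = B k w E1 * v3 E1 + B k w E2 * v3 E2.
Proof.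
  intros Hk HO Hf Hw. destruct (frame_nz k O E1 E2 Hk HO Hf) as [H1 [H2 [H3 HE]]].
  subst E2. unfold Jrot in *. rewrite nrm_nz in * by auto.
  destruct (kcases k Hk) as [[_ [He Hs]]|[_ [He Hs]]];
  destruct O as [[o1 o2] o3]; destruct E1 as [[a1 a2] a3]; destruct w as [[w1 w2] w3];
  vunf; rewrite He in *; set (s := sqrt (Rabs k)) in *; repeat split; nsatz.
Qed.

Lemma frame_basis_0 O E1 E2 w : onM 0 O -> frame 0 O E1 E2 -> v3 w = 0 ->
  v1 w = B 0 w E1 * v1 E1 + B 0 w E2 * v1 E2 /\
  v2 w = B 0 w E1 * v2 E1 + B 0 w E2 * v2 E2 /\
  v3 w = B 0 w E1 * v3 E1 + B 0 w E2 * v3 E2.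
Proof.
  intros HO Hf Hw. destruct (frame_0 O E1 E2 HO Hf) as [H1 [H2 [H3 HE]]].
  subst E2.
  destruct O as [[o1 o2] o3]; destruct E1 as [[a1 a2] a3]; destruct w as [[w1 w2] w3];
  vunf; rewrite eps0 in *; subst; repeat split; nsatz.
Qed.

Lemma angle a b l : 0 <= l -> a*a + b*b = l*l ->
  exists th, a = l * cos th /\ b = l * sin th.
Proof.
  intros Hl H. destruct (Req_dec l 0) as [H0|H0].
  - subst. exists 0. assert (a = 0) by nra. assert (b = 0) by nra. subst. split; ring.
  - assert (Hlp : 0 < l) by lra.
    set (x := a / l).
    assert (Hx : -1 <= x <= 1).
    { unfold x. assert (a*a <= l*l) by nra.
      assert (H2 : -l <= a <= l) by (split; nra).
      split; [apply (Rmult_le_reg_r l); [auto|]|apply (Rmult_le_reg_r l); [auto|]];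
      unfold Rdiv; rewrite Rmult_assoc, Rinv_l by lra; lra. }
    assert (Hxx : 1 - x*x = (b/l)*(b/l)).
    { unfold x. replace (b/l*(b/l)) with ((b*b)/(l*l)) by (field; lra).
      replace (b*b) with (l*l - a*a) by lra. field. lra. }
    destruct (Rle_dec 0 b) as [Hb|Hb].
    + exists (acos x). rewrite cos_acos by auto. rewrite sin_acos by auto.
      unfold Rsqr. rewrite (sqrt_lem_1 (1 - x*x) (b/l)); auto.
      * unfold x; split; field; lra.
      * rewrite Hxx. nra.
      * unfold Rdiv. apply Rmult_le_pos; auto. left; apply Rinv_0_lt_compat; auto.
    + exists (- acos x). rewrite cos_neg, sin_neg, cos_acos by auto. rewrite sin_acos by auto.
      unfold Rsqr. rewrite (sqrt_lem_1 (1 - x*x) (-b/l)).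
      * unfold x; split; field; lra.
      * rewrite Hxx. nra.
      * unfold Rdiv. apply Rmult_le_pos; [lra|]. left; apply Rinv_0_lt_compat; auto.
      * rewrite Hxx. field. lra.
Qed.

Lemma V3_eq x y : v1 x = v1 y -> v2 x = v2 y -> v3 x = v3 y -> x = y.
Proof. destruct x as [[x1 x2] x3]; destruct y as [[y1 y2] y3]; unfold v1, v2, v3; simpl; intros; subst; auto. Qed.

Lemma onM_nz k p : k <> 0 -> onM k p -> k * B k p p = 1.
Proof. intros Hk H. unfold onM in H. destruct (Req_EM_T k 0); [contradiction|].
  destruct H as [H _]. rewrite H. field. auto. Qed.

Lemma reach_common k O E1 E2 p r c0 :
  onM k O -> frame k O E1 E2 ->
  1 - k * area_a k r = c0 -> 0 <= ell k r ->
  (exists w, p = vadd (vscal c0 O) w /\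
     v1 w = B k w E1 * v1 E1 + B k w E2 * v1 E2 /\
     v2 w = B k w E1 * v2 E1 + B k w E2 * v2 E2 /\
     v3 w = B k w E1 * v3 E1 + B k w E2 * v3 E2 /\
     B k w w = ell k r * ell k r) ->
  exists th, Phi k O E1 E2 r th = p.
Proof.
  intros HO Hf Hc Hl [w [Hp [D1 [D2 [D3 Hww]]]]].
  destruct Hf as [_ [_ [H11 [H22 [H12 _]]]]].
  set (a := B k w E1) in *. set (b := B k w E2) in *.
  assert (Hab : a*a + b*b = ell k r * ell k r).
  { rewrite <- Hww. clear Hww. unfold a, b in *.
    destruct E1 as [[a1 a2] a3]; destruct E2 as [[b1 b2] b3]; destruct w as [[w1 w2] w3].
    vunf. set (e := eps k) in *. nsatz. }
  destruct (angle a b (ell k r) Hl Hab) as [th [Ha Hb]].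
  exists th. subst p. unfold Phi, geod. rewrite Hc.
  apply V3_eq; vunf; [rewrite D1|rewrite D2|rewrite D3]; rewrite Ha, Hb; ring.
Qed.

Lemma wfacts k O p : k <> 0 -> onM k O -> onM k p ->
  let c0 := k * B k O p in let w := vsub p (vscal c0 O) in
  p = vadd (vscal c0 O) w /\ B k w O = 0 /\ k * B k w w = 1 - c0 * c0.
Proof.
  intros Hk HO Hp c0 w. apply onM_nz in HO; auto. apply onM_nz in Hp; auto.
  unfold w, c0 in *. clear w c0.
  destruct O as [[o1 o2] o3]; destruct p as [[p1 p2] p3].
  split; [apply V3_eq; vunf; ring|]. vunf. set (e := eps k) in *. split; nsatz.
Qed.

Lemma reach_nz k O E1 E2 p r : k <> 0 -> onM k O -> frame k O E1 E2 -> onM k p ->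
  1 - k * area_a k r = k * B k O p -> 0 <= ell k r ->
  k * (ell k r * ell k r) = 1 - (k * B k O p) * (k * B k O p) ->
  exists th, Phi k O E1 E2 r th = p.
Proof.
  intros Hk HO Hf Hp Hc Hl Hll.
  destruct (wfacts k O p Hk HO Hp) as [Hpw [HwO Hww]].
  eapply reach_common; eauto.
  eexists; split; [exact Hpw|].
  destruct (frame_basis_nz k O E1 E2 _ Hk HO Hf HwO) as [D1 [D2 D3]].
  repeat split; auto.
  apply (Rmult_eq_reg_l k); auto. rewrite Hww, Hll. reflexivity.
Qed.

Lemma polar_exists_pos k O E1 E2 p : 0 < k -> onM k O -> frame k O E1 E2 -> onM k p ->
  exists rt, polar k O E1 E2 p rt.
Proof.
  intros Hk HO Hf Hp. assert (Hk0 : k <> 0) by lra.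
  pose proof (onM_nz k O Hk0 HO) as HOO. pose proof (onM_nz k p Hk0 Hp) as Hpp.
  set (c0 := k * B k O p).
  assert (He : eps k = 1) by (unfold eps; destruct (Rlt_dec k 0); lra).
  assert (Hc0 : c0 * c0 <= 1).
  { unfold c0. destruct O as [[o1 o2] o3]; destruct p as [[p1 p2] p3]. vunf. rewrite He in *.
    assert (L : (o1*p1+o2*p2+1*(o3*p3))*(o1*p1+o2*p2+1*(o3*p3)) <=
                (o1*o1+o2*o2+1*(o3*o3))*(p1*p1+p2*p2+1*(p3*p3))).
    { assert (E : (o1*o1+o2*o2+1*(o3*o3))*(p1*p1+p2*p2+1*(p3*p3)) -
                 (o1*p1+o2*p2+1*(o3*p3))*(o1*p1+o2*p2+1*(o3*p3)) =
                 (o1*p2-o2*p1)^2+(o2*p3-o3*p2)^2+(o3*p1-o1*p3)^2) by ring.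
      pose proof (pow2_ge_0 (o1*p2-o2*p1)). pose proof (pow2_ge_0 (o2*p3-o3*p2)).
      pose proof (pow2_ge_0 (o3*p1-o1*p3)). lra. }
    try rewrite He.
    apply (Rle_trans _ ((k*k) * ((o1*o1+o2*o2+1*(o3*o3))*(p1*p1+p2*p2+1*(p3*p3))))).
    + replace (k * (o1 * p1 + o2 * p2 + 1 * (o3 * p3)) * (k * (o1 * p1 + o2 * p2 + 1 * (o3 * p3))))
        with ((k*k) * ((o1*p1+o2*p2+1*(o3*p3))*(o1*p1+o2*p2+1*(o3*p3)))) by ring.
      apply Rmult_le_compat_l; nra.
    + right. replace ((k*k) * ((o1*o1+o2*o2+1*(o3*o3))*(p1*p1+p2*p2+1*(p3*p3))))
        with ((k*(o1*o1+o2*o2+1*(o3*o3)))*(k*(p1*p1+p2*p2+1*(p3*p3)))) by ring.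
      rewrite HOO, Hpp. ring. }
  assert (Hb : -1 <= c0 <= 1) by (split; nra).
  pose proof (sqrt_lt_R0 k Hk) as Hsk.
  set (r := acos c0 / sqrt k).
  assert (Hr : sqrt k * r = acos c0) by (unfold r; field; lra).
  assert (Ha : area_a k r = (1 - c0) / k).
  { unfold area_a. destruct (Rlt_dec 0 k); [|lra]. rewrite Hr, cos_acos; auto. }
  assert (Hl : ell k r = sqrt (1 - c0*c0) / sqrt k).
  { unfold ell. destruct (Rlt_dec 0 k); [|lra]. rewrite Hr, sin_acos; auto. }
  assert (H1c : 0 <= 1 - c0 * c0) by lra.
  destruct (reach_nz k O E1 E2 p r Hk0 HO Hf Hp) as [th Hth].
  - rewrite Ha. unfold c0. field. lra.
  - rewrite Hl. unfold Rdiv. apply Rmult_le_pos; [apply sqrt_pos|left; apply Rinv_0_lt_compat; auto].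
  - rewrite Hl. fold c0. replace (k * (sqrt (1 - c0 * c0) / sqrt k * (sqrt (1 - c0 * c0) / sqrt k)))
      with ((sqrt (1 - c0 * c0) * sqrt (1 - c0 * c0)) * (k / (sqrt k * sqrt k))) by (field; lra).
    rewrite !sqrt_sqrt by lra. field. lra.
  - exists (r, th). unfold polar. simpl. split; [auto|]. split.
    + unfold r. unfold Rdiv. apply Rmult_le_pos; [apply acos_bound|left; apply Rinv_0_lt_compat; auto].
    + intros _. unfold r. unfold Rdiv. apply Rmult_le_compat_r; [left; apply Rinv_0_lt_compat; auto|apply acos_bound].
Qed.

Lemma ln_ge0 y : 1 <= y -> 0 <= ln y.
Proof. intros H. destruct (Rle_lt_or_eq_dec 1 y H) as [H1|H1].
  - left. rewrite <- ln_1. apply ln_increasing; lra.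
  - subst. rewrite ln_1. lra. Qed.

Lemma polar_exists_neg k O E1 E2 p : k < 0 -> onM k O -> frame k O E1 E2 -> onM k p ->
  exists rt, polar k O E1 E2 p rt.
Proof.
  intros Hk HO Hf Hp. assert (Hk0 : k <> 0) by lra.
  pose proof (onM_nz k O Hk0 HO) as HOO. pose proof (onM_nz k p Hk0 Hp) as Hpp.
  assert (HO3 : 0 < v3 O).
  { unfold onM in HO. destruct (Req_EM_T k 0); [lra|]. apply HO; auto. }
  assert (Hp3 : 0 < v3 p).
  { unfold onM in Hp. destruct (Req_EM_T k 0); [lra|]. apply Hp; auto. }
  set (c0 := k * B k O p).
  assert (He : eps k = -1) by (unfold eps; destruct (Rlt_dec k 0); lra).
  assert (Hc0 : 1 <= c0).
  { unfold c0. destruct O as [[o1 o2] o3]; destruct p as [[p1 p2] p3]. vunf. rewrite He in *.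
    set (m := - / k).
    assert (Hm : 0 < m) by (unfold m; apply Ropp_0_gt_lt_contravar; apply Rinv_lt_0_compat; auto).
    assert (Ho : o3*o3 = o1*o1+o2*o2+m).
    { unfold m. apply (Rmult_eq_reg_l k); auto. field_simplify; auto. lra. }
    assert (Hq : p3*p3 = p1*p1+p2*p2+m).
    { unfold m. apply (Rmult_eq_reg_l k); auto. field_simplify; auto. lra. }
    assert (HX : o1*p1+o2*p2+m <= o3*p3).
    { set (Y := o1*p1+o2*p2+m).
      assert (Hsq : (o3*p3)*(o3*p3) - Y*Y = (o1*p2-o2*p1)^2 + m*((o1-p1)^2+(o2-p2)^2)).
      { unfold Y. replace ((o3*p3)*(o3*p3)) with ((o3*o3)*(p3*p3)) by ring. rewrite Ho, Hq. ring. }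
      pose proof (pow2_ge_0 (o1*p2-o2*p1)). pose proof (pow2_ge_0 (o1-p1)).
      pose proof (pow2_ge_0 (o2-p2)).
      assert (0 <= m*((o1-p1)^2+(o2-p2)^2)) by (apply Rmult_le_pos; lra).
      assert (0 < o3*p3) by (apply Rmult_lt_0_compat; auto).
      destruct (Rle_dec Y 0); [lra|]. nra. }
    assert (Hkm : k * m = -1) by (unfold m; field; auto).
    nra. }
  assert (Hsk : 0 < sqrt (- k)) by (apply sqrt_lt_R0; lra).
  set (q := sqrt (c0*c0 - 1)).
  assert (Hq : q * q = c0*c0 - 1) by (unfold q; apply sqrt_sqrt; nra).
  assert (Hq0 : 0 <= q) by apply sqrt_pos.
  set (y := c0 + q).
  assert (Hy : 1 <= y) by (unfold y; lra).
  assert (Hyi : / y = c0 - q).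
  { apply (Rmult_eq_reg_l y); [|lra]. rewrite Rinv_r by lra. unfold y. nra. }
  set (r := ln y / sqrt (- k)).
  assert (Hr : sqrt (- k) * r = ln y) by (unfold r; field; lra).
  assert (Hexp1 : exp (ln y) = y) by (apply exp_ln; lra).
  assert (Hexp2 : exp (- ln y) = c0 - q) by (rewrite exp_Ropp, Hexp1; auto).
  assert (Ha : area_a k r = (1 - c0) / k).
  { unfold area_a. destruct (Rlt_dec 0 k); [lra|]. destruct (Req_EM_T k 0); [lra|].
    rewrite Hr. unfold cosh. rewrite Hexp1, Hexp2. unfold y. field. lra. }
  assert (Hl : ell k r = q / sqrt (- k)).
  { unfold ell. destruct (Rlt_dec 0 k); [lra|]. destruct (Req_EM_T k 0); [lra|].
    rewrite Hr. unfold sinh. rewrite Hexp1, Hexp2. unfold y. field. lra. }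
  destruct (reach_nz k O E1 E2 p r Hk0 HO Hf Hp) as [th Hth].
  - rewrite Ha. unfold c0. field. lra.
  - rewrite Hl. unfold Rdiv. apply Rmult_le_pos; [auto|left; apply Rinv_0_lt_compat; auto].
  - rewrite Hl. fold c0. replace (k * (q / sqrt (- k) * (q / sqrt (- k))))
      with ((q * q) * (k / (sqrt (- k) * sqrt (- k)))) by (field; lra).
    rewrite sqrt_sqrt by lra. rewrite Hq. field. lra.
  - exists (r, th). unfold polar. simpl. split; [auto|]. split.
    + unfold r. unfold Rdiv. apply Rmult_le_pos; [apply ln_ge0; auto|left; apply Rinv_0_lt_compat; auto].
    + intros; lra.
Qed.

Lemma polar_exists_0 O E1 E2 p : onM 0 O -> frame 0 O E1 E2 -> onM 0 p ->
  exists rt, polar 0 O E1 E2 p rt.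
Proof.
  intros HO Hf Hp.
  assert (Hp3 : v3 p = 0) by (unfold onM in Hp; destruct (Req_EM_T 0 0); [auto|lra]).
  destruct (frame_0 O E1 E2 HO Hf) as [HO3 [H13 [H11 HE]]].
  set (w := vsub p O).
  assert (Hw3 : v3 w = 0) by (unfold w; vunf; rewrite Hp3, HO3; ring).
  destruct (frame_basis_0 O E1 E2 w HO Hf Hw3) as [D1 [D2 D3]].
  set (a := B 0 w E1) in *. set (b := B 0 w E2) in *.
  assert (Hww : B 0 w w = a*a + b*b).
  { clear D3. unfold a, b in *. rewrite HE in *. clearbody w.
    destruct E1 as [[a1 a2] a3]; destruct w as [[w1 w2] w3]. vunf. rewrite eps0 in *. subst. nsatz. }
  set (r := sqrt (a*a + b*b)).
  assert (Hrr : r * r = a*a+b*b) by (unfold r; apply sqrt_sqrt; nra).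
  destruct (reach_common 0 O E1 E2 p r 1 HO Hf) as [th Hth].
  - ring.
  - rewrite ell0. apply sqrt_pos.
  - exists w. split; [unfold w; apply V3_eq; vunf; ring|]. repeat split; auto.
    rewrite ell0, Hww, Hrr. auto.
  - exists (r, th). unfold polar. simpl. split; [auto|]. split; [apply sqrt_pos|intros; lra].
Qed.

Lemma polar_exists k O E1 E2 p : onM k O -> frame k O E1 E2 -> onM k p ->
  exists rt, polar k O E1 E2 p rt.
Proof.
  intros HO Hf Hp. destruct (Rtotal_order k 0) as [H|[H|H]].
  - eapply polar_exists_neg; eauto.
  - subst. eapply polar_exists_0; eauto.
  - eapply polar_exists_pos; eauto.
Qed.

Lemma polar_of_spec k O E1 E2 p : onM k O -> frame k O E1 E2 -> onM k p ->
  Phi k O E1 E2 (fst (polar_of k O E1 E2 p)) (snd (polar_of k O E1 E2 p)) = p.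
Proof.
  intros. unfold polar_of.
  destruct (epsilon_spec (inhabits (0,0)) (polar k O E1 E2 p) (polar_exists k O E1 E2 p H H0 H1))
    as [Hp _]. exact Hp.
Qed.



Lemma integ L k (f D g1 g2 g2c : R -> R) : 0 < L ->
  (forall s, is_derive f s (D s)) -> (forall s, continuous D s) -> f L = f 0 ->
  (forall s, continuous g2c s) -> (forall s, g2 s = g2c s) ->
  (forall s, g1 s + k * g2 s = 1 - D s) ->
  RInt g1 0 L + k * RInt g2 0 L = L.
Proof.
  intros HL Hd Hc Hper Hc2 Hg2 Hg1.
  assert (IA : is_RInt D 0 L 0).
  { assert (IA0 : is_RInt D 0 L (minus (f L) (f 0))) by (apply (@is_RInt_derive R_CompleteNormedModule); intros; auto).
    replace (minus (f L) (f 0)) with 0 in IA0; auto.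
    rewrite Hper. unfold minus, plus, opp; simpl. ring. }
  assert (I2 : is_RInt g2c 0 L (RInt g2c 0 L)).
  { apply (@RInt_correct R_CompleteNormedModule). apply (@ex_RInt_continuous R_CompleteNormedModule). intros; auto. }
  assert (I1 := is_RInt_minus _ _ _ _ _ _ (is_RInt_minus _ _ _ _ _ _ (is_RInt_const 0 L 1) IA)
                  (is_RInt_scal _ _ _ k _ I2)).
  assert (E1 : RInt g1 0 L = minus (minus (scal (L - 0) 1) 0) (scal k (RInt g2c 0 L))).
  { apply (@is_RInt_unique R_CompleteNormedModule). eapply is_RInt_ext; [|exact I1].
    intros x _. simpl. rewrite <- (Hg2 x).
    transitivity (1 - D x - k * g2 x); [reflexivity|]. rewrite <- Hg1. ring. }
  rewrite E1. rewrite (RInt_ext g2 g2c) by (intros; auto).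
  change (L - 0) with (L - 0). unfold minus, plus, opp, scal, mult; simpl. unfold mult; simpl. ring.
Qed.

Lemma der_plus (f g : R -> R) (s a b : R) : is_derive f s a -> is_derive g s b ->
  is_derive (fun t => f t + g t) s (a + b).
Proof. intros. apply (@is_derive_plus R_AbsRing R_NormedModule f g); auto. Qed.
Lemma der_mult (f g : R -> R) (s a b : R) : is_derive f s a -> is_derive g s b ->
  is_derive (fun t => f t * g t) s (a * g s + f s * b).
Proof. intros. apply (@is_derive_mult R_AbsRing f g); auto. intros; apply Rmult_comm. Qed.
Lemma der_cmul (c : R) (f : R -> R) (s a : R) : is_derive f s a -> is_derive (fun t => c * f t) s (c * a).
Proof. intros. apply (is_derive_scal f); auto. Qed.
Lemma der_eq (f : R -> R) (s a b : R) : is_derive f s a -> a = b -> is_derive f s b.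
Proof. intros; subst; auto. Qed.

Lemma cont_plus (f g : R -> R) (s : R) : continuous f s -> continuous g s -> continuous (fun t => f t + g t) s.
Proof. intros. apply (continuous_plus f g); auto. Qed.
Lemma cont_mult (f g : R -> R) (s : R) : continuous f s -> continuous g s -> continuous (fun t => f t * g t) s.
Proof. intros. apply (continuous_mult f g); auto. Qed.
Lemma cont_const (c s : R) : continuous (fun _ : R => c) s.
Proof. apply continuous_const. Qed.
Lemma cont_opp (f : R -> R) (s : R) : continuous f s -> continuous (fun t => - f t) s.
Proof. intros. apply (continuous_opp f); auto. Qed.

Definition vder (x : R -> V3) (s : R) (x' : V3) : Prop :=
  is_derive (fun t => v1 (x t)) s (v1 x') /\ is_derive (fun t => v2 (x t)) s (v2 x') /\
  is_derive (fun t => v3 (x t)) s (v3 x').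
Definition vcont (x : R -> V3) (s : R) : Prop :=
  continuous (fun t => v1 (x t)) s /\ continuous (fun t => v2 (x t)) s /\
  continuous (fun t => v3 (x t)) s.

Lemma B_der k x y s x' y' : vder x s x' -> vder y s y' ->
  is_derive (fun t => B k (x t) (y t)) s (B k x' (y s) + B k (x s) y').
Proof.
  intros [X1 [X2 X3]] [Y1 [Y2 Y3]]. unfold B.
  eapply der_eq.
  - apply der_plus; [apply der_plus|apply der_cmul]; apply der_mult; eauto.
  - cbv beta. ring.
Qed.

Lemma B_cont k x y s : vcont x s -> vcont y s -> continuous (fun t => B k (x t) (y t)) s.
Proof.
  intros [X1 [X2 X3]] [Y1 [Y2 Y3]]. unfold B.
  apply cont_plus; [apply cont_plus|apply (cont_mult (fun _ => eps k)); [apply cont_const|]];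
  apply cont_mult; auto.
Qed.

Lemma vder_const c s : vder (fun _ => c) s (mkV 0 0 0).
Proof. unfold vder, mkV, v1, v2, v3; simpl; split; [|split]; apply (@is_derive_const R_AbsRing R_NormedModule). Qed.
Lemma vcont_const c s : vcont (fun _ => c) s.
Proof. split; [|split]; apply cont_const. Qed.

Lemma const_der0 (F : R -> R) (s D c : R) : (forall t, F t = c) -> is_derive F s D -> D = 0.
Proof.
  intros HF HD. apply is_derive_unique in HD. rewrite <- HD.
  rewrite (Derive_ext F (fun _ => c)) by auto. apply Derive_const.
Qed.

Section Curve.
Variable gam : R -> V3.
Hypothesis HC : C2curve gam.

Lemma C2_comp1 : C2fun (fun t => v1 (gam t)). Proof. apply HC. Qed.
Lemma C2_comp2 : C2fun (fun t => v2 (gam t)). Proof. apply HC. Qed.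
Lemma C2_comp3 : C2fun (fun t => v3 (gam t)). Proof. apply HC. Qed.

Lemma vder_gam s : vder gam s (Dv gam s).
Proof.
  destruct HC as [[A1 _] [[A2 _] [A3 _]]].
  split; [|split]; unfold Dv, mkV, v1, v2, v3; simpl; apply Derive_correct; auto.
Qed.

Lemma vder_T s : vder (Dv gam) s (Dv (Dv gam) s).
Proof.
  destruct HC as [[_ [A1 _]] [[_ [A2 _]] [_ [A3 _]]]].
  split; [|split]; unfold Dv at 1; unfold mkV, v1, v2, v3; simpl; apply Derive_correct; auto.
Qed.

Lemma vcont_A s : vcont (Dv (Dv gam)) s.
Proof.
  destruct HC as [[_ [_ A1]] [[_ [_ A2]] [_ [_ A3]]]].
  split; [|split]; unfold Dv at 1; unfold mkV, v1, v2, v3; simpl; auto.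
Qed.

Lemma vcont_gam s : vcont gam s.
Proof.
  destruct HC as [[A1 _] [[A2 _] [A3 _]]].
  split; [|split]; apply (@ex_derive_continuous R_AbsRing R_NormedModule); auto.
Qed.

Lemma vcont_T s : vcont (Dv gam) s.
Proof.
  destruct HC as [[_ [A1 _]] [[_ [A2 _]] [_ [A3 _]]]].
  split; [|split]; unfold Dv, mkV, v1, v2, v3; simpl; apply (@ex_derive_continuous R_AbsRing R_NormedModule); auto.
Qed.

Lemma Dv_periodic L : (forall s, gam (s + L) = gam s) -> Dv gam L = Dv gam 0.
Proof.
  intros Hp.
  assert (K : forall (g : R -> R), (forall t, g (t + L) = g t) -> ex_derive g L ->
     Derive g L = Derive g 0).
  { intros g Hg Hd.
    assert (H1 : is_derive (fun t => g (t + L)) 0 (scal 1 (Derive g L))).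
    { apply (@is_derive_comp R_AbsRing R_NormedModule g (fun t => t + L)).
      - replace (0 + L) with L by ring. apply Derive_correct; auto.
      - auto_derive; auto. }
    apply is_derive_unique in H1.
    assert (H2 : Derive (fun t => g (t+L)) 0 = Derive g 0) by (apply Derive_ext; auto).
    rewrite <- H2. etransitivity; [|symmetry; apply H1].
    unfold scal; simpl; unfold mult; simpl. ring. }
  destruct HC as [[A1 _] [[A2 _] [A3 _]]].
  unfold Dv. f_equal; apply K; auto; intros t; rewrite Hp; auto.
Qed.
End Curve.



Lemma alg_nz k O p T A q : k <> 0 -> k * B k p p = 1 -> B k T p = 0 ->
  B k A p + B k T T = 0 -> B k T T = 1 -> B k A T = 0 ->
  q * eps k = B k A (nrm k p) ->
  (sqrt (Rabs k) * det T O p) * B k (vsub A (vscal q (nrm k p))) (Jrot k p T)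
  = B k A O + k * B k O p.
Proof.
  intros Hk H1 H2 H3 H4 H5 Hq. unfold Jrot in *. rewrite nrm_nz in * by auto.
  destruct (kcases k Hk) as [[_ [He Hs]]|[_ [He Hs]]];
  destruct O as [[o1 o2] o3]; destruct p as [[p1 p2] p3]; destruct T as [[t1 t2] t3];
  destruct A as [[a1 a2] a3];
  vunf; rewrite He in *; set (s := sqrt (Rabs k)) in *; nsatz.
Qed.

Lemma alg_0 O p T A q : v3 p = 0 -> v3 O = 0 -> v3 T = 0 -> B 0 T T = 1 -> B 0 A T = 0 ->
  q * eps 0 = B 0 A (nrm 0 p) ->
  (- v1 T * (v2 p - v2 O) + v2 T * (v1 p - v1 O)) * B 0 (vsub A (vscal q (nrm 0 p))) (Jrot 0 p T)
  = - B 0 A (vsub p O).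
Proof.
  intros H1 H2 H3 H4 H5 Hq. unfold Jrot in *. rewrite nrm_0 in *.
  destruct O as [[o1 o2] o3]; destruct p as [[p1 p2] p3]; destruct T as [[t1 t2] t3];
  destruct A as [[a1 a2] a3];
  vunf; rewrite eps0 in *; subst; nsatz.
Qed.

Lemma Bsym k x y : B k x y = B k y x.
Proof. unfold B; ring. Qed.

Lemma Bnn k p : k <> 0 -> k * B k p p = 1 -> B k (nrm k p) (nrm k p) = eps k.
Proof.
  intros Hk H. rewrite nrm_nz by auto.
  destruct (kcases k Hk) as [[Hk' [He Hs]]|[Hk' [He Hs]]];
  destruct p as [[p1 p2] p3]; vunf; rewrite He in *; set (s := sqrt (Rabs k)) in *.
  - apply (Rmult_eq_reg_l k); [|lra].
    transitivity ((s*s)*(k * (p1 * p1 + p2 * p2 + 1 * (p3 * p3)))); [ring|]. rewrite H, Hs; ring.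
  - apply (Rmult_eq_reg_l k); [|lra].
    transitivity ((s*s)*(k * (p1 * p1 + p2 * p2 + -1 * (p3 * p3)))); [ring|]. rewrite H, Hs; ring.
Qed.

Lemma eps_nz k : eps k <> 0.
Proof. unfold eps. destruct (Rlt_dec k 0); lra. Qed.

Lemma cont_minus (f g : R -> R) (s : R) : continuous f s -> continuous g s ->
  continuous (fun t => f t - g t) s.
Proof. intros. apply (cont_plus f (fun t => - g t)); auto. apply cont_opp; auto. Qed.

Lemma curve_nz k O E1 E2 gam L :
  k <> 0 -> onM k O -> frame k O E1 E2 -> C2curve gam -> (forall s, onM k (gam s)) ->
  (forall s, gam (s + L) = gam s) -> (forall s, B k (Dv gam s) (Dv gam s) = 1) -> 0 < L ->
  RInt (fun s => ell2dtheta k O E1 E2 (gam s) (Dv gam s) * kappa_g k gam s) 0 L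
  + k * RInt (fun s => area_a k (rho k O E1 E2 (gam s))) 0 L = L.
Proof.
  intros Hk HO Hf HC Hon Hper HTT HL.
  assert (Hpp : forall s, k * B k (gam s) (gam s) = 1) by (intros; apply onM_nz; auto).
  assert (HTp : forall s, B k (Dv gam s) (gam s) = 0).
  { intros s. pose proof (B_der k gam gam s _ _ (vder_gam gam HC s) (vder_gam gam HC s)) as D.
    apply (const_der0 _ _ _ (/k)) in D.
    - rewrite (Bsym k (gam s) (Dv gam s)) in D. lra.
    - intros t. apply (Rmult_eq_reg_l k); auto. rewrite Hpp. field. auto. }
  assert (HAp : forall s, B k (Dv (Dv gam) s) (gam s) + B k (Dv gam s) (Dv gam s) = 0).
  { intros s. pose proof (B_der k (Dv gam) gam s _ _ (vder_T gam HC s) (vder_gam gam HC s)) as D.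
    apply (const_der0 _ _ _ 0) in D; auto. }
  assert (HAT : forall s, B k (Dv (Dv gam) s) (Dv gam s) = 0).
  { intros s. pose proof (B_der k (Dv gam) (Dv gam) s _ _ (vder_T gam HC s) (vder_T gam HC s)) as D.
    apply (const_der0 _ _ _ 1) in D; auto. rewrite (Bsym k (Dv gam s)) in D. lra. }
  apply (integ L k (fun s => -1 * B k (Dv gam s) O) (fun s => -1 * B k (Dv (Dv gam) s) O) _ _
     (fun s => (1 - k * B k O (gam s)) * / k)); auto.
  - intros s. eapply der_eq.
    + apply der_cmul. apply (B_der k (Dv gam) (fun _ => O)); [apply vder_T; auto|apply vder_const].
    + unfold B, mkV, v1, v2, v3; simpl; ring.
  - intros s. apply (cont_mult (fun _ => -1)); [apply cont_const|].
    apply (B_cont k (Dv (Dv gam)) (fun _ => O)); [apply vcont_A; auto|apply vcont_const].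
  - rewrite (Dv_periodic gam HC L); auto.
  - intros s. apply cont_mult; [|apply cont_const]. apply cont_minus; [apply cont_const|].
    apply (cont_mult (fun _ => k)); [apply cont_const|].
    apply (B_cont k (fun _ => O) gam); [apply vcont_const|apply vcont_gam; auto].
  - intros s. unfold rho.
    pose proof (polar_of_spec k O E1 E2 (gam s) HO Hf (Hon s)) as HP.
    destruct (polar_facts_nz k O E1 E2 _ _ _ Hk HO Hf HP) as [Ha _].
    rewrite <- Ha. field. auto.
  - intros s. unfold rho, ell2dtheta.
    pose proof (polar_of_spec k O E1 E2 (gam s) HO Hf (Hon s)) as HP.
    destruct (polar_facts_nz k O E1 E2 _ _ _ Hk HO Hf HP) as [Ha Hd].
    rewrite Hd. unfold kappa_g, covacc. cbv zeta.
    rewrite (Bnn k (gam s) Hk (Hpp s)).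
    rewrite (alg_nz k O (gam s) (Dv gam s) (Dv (Dv gam) s)); auto.
    + lra.
    + field. apply eps_nz.
Qed.

Lemma vder_subc x s x' c : vder x s x' -> vder (fun t => vsub (x t) c) s x'.
Proof.
  intros [X1 [X2 X3]]. unfold vder, vsub, vadd, vscal, mkV, v1, v2, v3 in *; simpl in *.
  split; [|split]; (eapply der_eq; [apply (der_plus _ (fun _ => _)); [eassumption|apply (@is_derive_const R_AbsRing R_NormedModule)]|]); simpl; unfold zero; simpl; ring.
Qed.

Lemma vcont_subc x s c : vcont x s -> vcont (fun t => vsub (x t) c) s.
Proof.
  intros [X1 [X2 X3]]. unfold vcont, vsub, vadd, vscal, mkV, v1, v2, v3 in *; simpl in *.
  split; [|split]; apply (cont_plus _ (fun _ => _)); auto; apply cont_const.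
Qed.

Lemma Bnn0 p : B 0 (nrm 0 p) (nrm 0 p) = eps 0.
Proof. rewrite nrm_0. unfold B, mkV, v1, v2, v3; simpl. ring. Qed.

Lemma curve_0 O E1 E2 gam L :
  onM 0 O -> frame 0 O E1 E2 -> C2curve gam -> (forall s, onM 0 (gam s)) ->
  (forall s, gam (s + L) = gam s) -> (forall s, B 0 (Dv gam s) (Dv gam s) = 1) -> 0 < L ->
  RInt (fun s => ell2dtheta 0 O E1 E2 (gam s) (Dv gam s) * kappa_g 0 gam s) 0 L
  + 0 * RInt (fun s => area_a 0 (rho 0 O E1 E2 (gam s))) 0 L = L.
Proof.
  intros HO Hf HC Hon Hper HTT HL.
  destruct (frame_0 O E1 E2 HO Hf) as [HO3 _].
  assert (Hp3 : forall s, v3 (gam s) = 0).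
  { intros s. specialize (Hon s). unfold onM in Hon. destruct (Req_EM_T 0 0); [auto|lra]. }
  assert (HT3 : forall s, v3 (Dv gam s) = 0).
  { intros s. destruct (vder_gam gam HC s) as [_ [_ D]]. apply (const_der0 _ _ _ 0) in D; auto. }
  assert (HAT : forall s, B 0 (Dv (Dv gam) s) (Dv gam s) = 0).
  { intros s. pose proof (B_der 0 (Dv gam) (Dv gam) s _ _ (vder_T gam HC s) (vder_T gam HC s)) as D.
    apply (const_der0 _ _ _ 1) in D; auto. rewrite (Bsym 0 (Dv gam s)) in D. lra. }
  apply (integ L 0 (fun s => B 0 (Dv gam s) (vsub (gam s) O))
     (fun s => B 0 (Dv (Dv gam) s) (vsub (gam s) O) + B 0 (Dv gam s) (Dv gam s)) _ _
     (fun s => B 0 (vsub (gam s) O) (vsub (gam s) O) / 2)); auto.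
  - intros s. apply (B_der 0 (Dv gam) (fun t => vsub (gam t) O)); [apply vder_T; auto|].
    apply vder_subc. apply vder_gam; auto.
  - intros s. apply cont_plus.
    + apply (B_cont 0 (Dv (Dv gam)) (fun t => vsub (gam t) O)); [apply vcont_A; auto|].
      apply vcont_subc; apply vcont_gam; auto.
    + apply B_cont; apply vcont_T; auto.
  - rewrite (Dv_periodic gam HC L); auto. replace (gam L) with (gam 0); auto. rewrite <- (Hper 0). f_equal; ring.
  - intros s. apply (cont_mult _ (fun _ => / 2)); [|apply cont_const].
    apply (B_cont 0 (fun t => vsub (gam t) O) (fun t => vsub (gam t) O));
    apply vcont_subc; apply vcont_gam; auto.
  - intros s. unfold rho.
    pose proof (polar_of_spec 0 O E1 E2 (gam s) HO Hf (Hon s)) as HP.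
    destruct (polar_facts_0 O E1 E2 _ _ _ HO Hf HP) as [Ha _]. auto.
  - intros s. unfold rho, ell2dtheta.
    pose proof (polar_of_spec 0 O E1 E2 (gam s) HO Hf (Hon s)) as HP.
    destruct (polar_facts_0 O E1 E2 _ _ _ HO Hf HP) as [Ha Hd].
    rewrite Hd. unfold kappa_g, covacc. cbv zeta.
    rewrite (Bnn0 (gam s)).
    rewrite (alg_0 O (gam s) (Dv gam s) (Dv (Dv gam) s)); auto.
    + rewrite HTT. ring.
    + field. apply eps_nz.
Qed.


Lemma sum_lin n (F G H : nat -> R) k :
  (forall i, (i < n)%nat -> F i = G i + k * H i) ->
  sumR n F = sumR n G + k * sumR n H.
Proof.
  induction n as [|n IH]; intros Hi; simpl.
  - ring.
  - rewrite IH by (intros; apply Hi; lia). rewrite (Hi n) by lia. ring.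
Qed.

Theorem theorem2p1 (k : R) (O E1 E2 : V3) (K : V3 -> Prop) (n : nat)
  (L : nat -> R) (gam : nat -> R -> V3) :
  onM k O -> frame k O E1 E2 ->
  compact_region_C2_boundary k K n L gam ->
  perimeter n L =
    sumR n (fun i => RInt (fun s => ell2dtheta k O E1 E2 (gam i s) (Dv (gam i) s)
                                    * kappa_g k (gam i) s) 0 (L i))
    + k * sumR n (fun i => RInt (fun s => area_a k (rho k O E1 E2 (gam i s))) 0 (L i)).
Proof.
  intros HO Hf HK. destruct HK as [_ [_ [_ [Hc _]]]].
  unfold perimeter. apply sum_lin. intros i Hi.
  destruct (Hc i Hi) as [HL [HC [Hon [Hper [HTT _]]]]].
  destruct (Req_dec k 0) as [Hk|Hk].
  - subst k. symmetry. apply curve_0; auto.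
  - symmetry. apply curve_nz; auto.
Qed.
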